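(* Let $\mathbb{F}$ be a field, $n\geq 1$, and let $\theta$ be a symplectic polarity of the projective space $\Delta=\mathsf{PG}(2n-1,\mathbb{F})$, viewed as a building of type $\mathsf{A}_{2n-1}$. Then for each odd $i$, no vertex of type $i$ is mapped by $\theta$ to an opposite vertex; and each vertex mapped to an opposite vertex is contained in a simplex of type $\{2,4,\ldots,2n-2\}$ that is mapped to an opposite simplex.
   Context: Vertices of type $i$ ($1\leq i\leq 2n-1$) of $\mathsf{PG}(2n-1,\mathbb{F})$ are the $i$-dimensional subspaces of $V=\mathbb{F}^{2n}$; simplices are flags. Two subspaces $U,U'$ are opposite iff $U+U'=V$ and $U\cap U'=0$; flags are opposite iff their members are pairwise opposite in this sense with complementary dimensions (equivalently, as simplices of the building). A symplectic polarity is a duality of the form $U^\theta=U^{\circ}=\{v: (u,v)=0\ \forall u\in U\}$ for a nondegenerate alternating form $(\cdot,\cdot)$ on $V$. *)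

(* Defs.v *)
(* Subspaces of V = F^m are represented by square matrices
   'M[F]_m through their row space (mxalgebra, scope %MS). *)
From HB Require Import structures.
From mathcomp Require Import all_boot all_order all_algebra.
Set Implicit Arguments. Unset Strict Implicit. Unset Printing Implicit Defensive.
Import GRing.Theory.
Local Open Scope ring_scope.

Section Defs.
Variables (F : fieldType) (m : nat).

Definition opposite_sub (U W : 'M[F]_m) : bool :=
  ((U + W)%MS == (1%:M : 'M[F]_m))%MS && (\rank (U :&: W)%MS == 0)%N.

Definition is_vertex (U : 'M[F]_m) : bool := (0 < \rank U < m)%N.

(* A simplex = a flag: a strictly increasing chain of proper nonzero
   subspaces (listed in increasing order). Its type is the set of ranks. *)
Definition is_flag (s : seq 'M[F]_m) : bool :=
  all is_vertex s && sorted (fun A B => (A < B)%MS) s.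

Definition opposite_flag (s t : seq 'M[F]_m) : Prop :=
  size s = size t /\
  (forall A, A \in s -> exists2 B, B \in t & (\rank A + \rank B = m)%N /\ opposite_sub A B) /\
  (forall B, B \in t -> exists2 A, A \in s & (\rank A + \rank B = m)%N /\ opposite_sub A B).

Definition alternating_nondeg (J : 'M[F]_m) : Prop :=
  (forall v : 'rV[F]_m, (v *m J *m v^T) 0 0 = 0) /\ J \in unitmx.

(* The symplectic polarity: U^theta = {v | (u,v) = 0 for all u in U},
   i.e. the rows v with v *m J^T *m U^T = 0. *)
Definition sp_polarity (J : 'M[F]_m) (U : 'M[F]_m) : 'M[F]_m :=
  kermx (J^T *m U^T).

End Defs.

(* Main.v *)
Require Import Defs.
From mathcomp Require Import all_boot all_order all_algebra zify.
Set Implicit Arguments. Unset Strict Implicit. Unset Printing Implicit Defensive.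
Import GRing.Theory.
Local Open Scope ring_scope.

Section Sp.
Variables (F : fieldType) (m : nat) (J : 'M[F]_m).
Hypothesis alt : alternating_nondeg J.

Lemma delta_form (i j : 'I_m) :
  ((delta_mx 0 i : 'rV[F]_m) *m J *m (delta_mx 0 j : 'rV[F]_m)^T) 0 0 = J i j.
Proof. by rewrite trmx_delta -rowE -colE !mxE. Qed.

Lemma trJ : J^T = - J.
Proof.
have pol : forall u v : 'rV[F]_m, (u *m J *m v^T) 0 0 = - (v *m J *m u^T) 0 0.
  move=> u v; have := alt.1 (u + v).
  have H : forall A B : 'M[F]_1, (A + B) 0 0 = A 0 0 + B 0 0 by move=> A B; rewrite mxE.
  rewrite linearD /= !mulmxDl !mulmxDr !H alt.1 alt.1 add0r addr0.
  by move/eqP; rewrite addr_eq0 => /eqP.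
apply/matrixP => i j; rewrite !mxE -!delta_form; exact: pol.
Qed.

Definition perpm p (P : 'M[F]_(p, m)) : 'M[F]_m := kermx (J^T *m P^T).

Lemma sub_perp p q (A : 'M[F]_(p, m)) (B : 'M[F]_(q, m)) :
  (A <= perpm B)%MS = (A *m J^T *m B^T == 0).
Proof. by rewrite /perpm sub_kermx mulmxA. Qed.

Lemma perp_sym p q (A : 'M[F]_(p, m)) (B : 'M[F]_(q, m)) :
  (A <= perpm B)%MS = (B <= perpm A)%MS.
Proof.
rewrite !sub_perp.
have E : (A *m J^T *m B^T)^T = - (B *m J^T *m A^T).
  have E2 : J = - J^T by rewrite trJ opprK.
  rewrite !trmx_mul !trmxK.
  by rewrite [X in B *m (X *m _)]E2 mulNmx mulmxN mulmxA.
by rewrite -trmx_eq0 E oppr_eq0.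
Qed.

Lemma perp_perp p (A : 'M[F]_(p, m)) : (A <= perpm (perpm A))%MS.
Proof. by rewrite perp_sym submx_refl. Qed.

Lemma perp_rank p (A : 'M[F]_(p, m)) : \rank (perpm A) = (m - \rank A)%N.
Proof.
rewrite /perpm mxrank_ker -mxrank_tr trmx_mul !trmxK mxrankMfree //.
by rewrite row_free_unit; case: alt.
Qed.

Lemma perp_anti p q (A : 'M[F]_(p, m)) (B : 'M[F]_(q, m)) :
  (A <= B)%MS -> (perpm B <= perpm A)%MS.
Proof. by move=> sAB; rewrite perp_sym; exact: submx_trans sAB (perp_perp B). Qed.

Lemma perp_adds p q r (A : 'M[F]_(p, m)) (B : 'M[F]_(q, m)) (C : 'M[F]_(r, m)) :
  (C <= perpm (A + B)%MS)%MS = (C <= perpm A)%MS && (C <= perpm B)%MS.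
Proof. by rewrite !(perp_sym C) addsmx_sub. Qed.

Lemma perpperp_sub (W : 'M[F]_m) : (perpm (perpm W) <= W)%MS.
Proof.
have := (mxrank_leqif_sup (perp_perp W)).2.
by rewrite !perp_rank subKn ?rank_leq_col // eqxx => <-.
Qed.

Definition nd (W : 'M[F]_m) := (W :&: perpm W)%MS == 0.

Lemma ndP (W : 'M[F]_m) : nd W -> forall p (x : 'M[F]_(p, m)),
  (x <= W)%MS -> (x <= perpm W)%MS -> x == 0.
Proof.
move=> ndW p x xW xP; rewrite -submx0 -(eqP ndW) sub_capmx xW xP //.
Qed.

Lemma nd_opp (W : 'M[F]_m) : opposite_sub W (perpm W) = nd W.
Proof.
rewrite /opposite_sub mxrank_eq0 /nd.
case ndW: (_ == 0); rewrite ?andbF ?andbT //.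
rewrite submx1 sub1mx /row_full.
have := mxrank_sum_cap W (perpm W).
rewrite (eqP ndW) mxrank0 addn0 perp_rank subnKC ?rank_leq_col // => ->.
by rewrite eqxx.
Qed.

Lemma nd_perp (W : 'M[F]_m) : nd W -> nd (perpm W).
Proof.
move=> ndW; rewrite /nd; apply: (ndP ndW).
  exact: submx_trans (capmxSr _ _) (perpperp_sub W).
exact: capmxSl.
Qed.

Lemma arith1 (a b c d : nat) : (a + (d - 1) <= b + d)%N -> (b + (d - 1) <= c + d)%N ->
  (1 <= d)%N -> (a <= c + 2)%N.
Proof. lia. Qed.

Lemma cap_lb p q (A : 'M[F]_(p, m)) (B : 'M[F]_(q, m)) :
  (\rank A + \rank B <= \rank (A :&: B)%MS + m)%N.
Proof. by rewrite -mxrank_sum_cap addnC leq_add2l rank_leq_col. Qed.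

Lemma ltrk p q r (A : 'M[F]_(p, m)) (B : 'M[F]_(q, m)) (x : 'M[F]_(r, m)) :
  (A <= B)%MS -> (x <= B)%MS -> ~~ (x <= A)%MS -> (\rank A < \rank B)%N.
Proof.
move=> sAB xB xA; rewrite ltn_neqAle mxrankS // andbT (mxrank_leqif_sup sAB).2.
by apply: contra xA => BA; exact: submx_trans xB BA.
Qed.

Lemma split_nd (W : 'M[F]_m) : nd W -> (0 < \rank W)%N ->
  exists W' : 'M[F]_m, [/\ nd W', (W' <= W)%MS & (\rank W' + 2 = \rank W)%N].
Proof.
move=> ndW rW.
set u := nz_row W.
have uW : (u <= W)%MS := nz_row_sub W.
have u0 : u != 0 by rewrite nz_row_eq0 -mxrank_eq0 -lt0n.
have uP : ~~ (u <= perpm W)%MS := contraNN (fun uP => ndP ndW uW uP) u0.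
rewrite perp_sym in uP.
case/row_subPn: uP => i wP.
set w := row i W in wP.
have wW : (w <= W)%MS := row_sub i W.
have uw : ~~ (u <= perpm w)%MS by rewrite perp_sym.
have uu : (u <= perpm u)%MS.
  rewrite sub_perp trJ mulmxN mulNmx oppr_eq0; apply/eqP/matrixP => a b.
  by rewrite !ord1 (alt.1 u) [in RHS]mxE.
have w0 : w != 0 by apply: contra wP => /eqP ->; rewrite sub0mx.
set M := (W :&: perpm u)%MS; set W' := (M :&: perpm w)%MS.
have rku : \rank u = 1%N by rewrite rank_rV u0.
have rkw : \rank w = 1%N by rewrite rank_rV w0.
have m1 : (1 <= m)%N by rewrite -rku rank_leq_col.
have lb1 := cap_lb W (perpm u).
have lb2 := cap_lb M (perpm w).
rewrite !perp_rank rku rkw -/M -/W' in lb1 lb2.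
have uM : (u <= M)%MS by rewrite sub_capmx uW uu.
have wM : ~~ (w <= M)%MS by apply: contra wP => /submx_trans; apply; exact: capmxSr.
have uW' : ~~ (u <= W')%MS by apply: contra uw => /submx_trans; apply; exact: capmxSr.
have W'M : (W' <= M)%MS := capmxSl _ _.
have MW : (M <= W)%MS := capmxSl _ _.
have W'W : (W' <= W)%MS := submx_trans W'M MW.
have r1 := ltrk (addsmxSl W' u) (addsmxSr W' u) uW'.
have r2 : (\rank (W' + u)%MS < \rank (W' + u + w)%MS)%N.
  apply: (ltrk (addsmxSl _ w) (addsmxSr _ w)).
  by apply: contra wM => /submx_trans; apply; rewrite addsmx_sub W'M uM.
have sX : ((W' + u + w)%MS <= W)%MS by rewrite !addsmx_sub W'W uW wW.
have r3 := mxrankS sX.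
have rkeq : (\rank W' + 2 = \rank W)%N.
  apply/eqP; rewrite eqn_leq; apply/andP; split.
    by apply: leq_trans r3; rewrite addn2; apply: leq_trans r2.
  exact: (arith1 lb1 lb2 m1).
have WX : (W <= W' + u + w)%MS.
  rewrite -(mxrank_leqif_sup sX).2 eqn_leq r3 /=.
  by rewrite -rkeq addn2; apply: leq_trans r2.
exists W'; split => //.
rewrite /nd; apply: (ndP ndW).
  exact: submx_trans (capmxSl _ _) W'W.
set x := (W' :&: perpm W')%MS.
have xW' : (x <= W')%MS := capmxSl _ _.
have xP : (x <= perpm W')%MS := capmxSr _ _.
have xu : (x <= perpm u)%MS := submx_trans xW' (submx_trans W'M (capmxSr _ _)).
have xw : (x <= perpm w)%MS := submx_trans xW' (capmxSr _ _).
have xX : (x <= perpm (W' + u + w)%MS)%MS by rewrite (perp_adds (W' + u)%MS w) (perp_adds W' u) xP xu xw.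
exact: submx_trans xX (perp_anti WX).
Qed.


Lemma nd_even k (W : 'M[F]_m) : \rank W = k -> nd W -> ~~ odd k.
Proof.
elim/ltn_ind: k W => k IH W rk ndW.
case: (posnP k) => [-> //|k0].
have rk0 : (0 < \rank W)%N by rewrite rk.
have [W' [ndW' _ rW']] := split_nd ndW rk0.
have rlt : (\rank W' < k)%N by rewrite -rk -rW' addn2.
have := IH _ rlt W' erefl ndW'.
by rewrite -rk -rW' addn2 /= negbK.
Qed.

Lemma ext_nd (W : 'M[F]_m) : nd W -> (\rank W + 2 <= m)%N ->
  exists W' : 'M[F]_m, [/\ nd W', (W <= W')%MS & \rank W' = (\rank W + 2)%N].
Proof.
move=> ndW rW.
have r0 : (0 < \rank (perpm W))%N.
  by rewrite perp_rank subn_gt0; apply: leq_trans rW; rewrite addn2.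
have [Z [ndZ ZP rZ]] := split_nd (nd_perp ndW) r0.
exists (perpm Z); split.
- exact: nd_perp.
- exact: submx_trans (perp_perp W) (perp_anti ZP).
- move: rZ; rewrite !perp_rank => rZ.
  have := rank_leq_col W; move: rZ rW; clear; lia.
Qed.

Definition ltr := fun A B : 'M[F]_m => (A < B)%MS.

Lemma down_chain j (W : 'M[F]_m) : nd W -> \rank W = (j.+1).*2 ->
  exists c : seq 'M[F]_m, [/\ all nd c,
     map mxrank c = [seq (i.+1).*2 | i <- iota 0 j] & sorted ltr (rcons c W)].
Proof.
elim: j W => [|j IH] W ndW rW; first by exists [::].
have rk0 : (0 < \rank W)%N by rewrite rW.
have [W' [ndW' W'W rW']] := split_nd ndW rk0.
have rW'2 : \rank W' = (j.+1).*2 by move: rW' rW; rewrite -!muln2; clear; lia.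
have [c [ndc rc sc]] := IH W' ndW' rW'2.
exists (rcons c W'); split.
- by rewrite all_rcons ndW' ndc.
- by rewrite map_rcons rc -addn1 iotaD map_cat cats1 add0n rW'2.
- rewrite -cats1 cat_rcons sorted_cat_cons sc /= andbT /ltr ltmxErank W'W.
  by rewrite /= -rW' addn2.
Qed.

Lemma up_chain j k (W : 'M[F]_m) : nd W -> \rank W = k.*2 ->
  ((k + j).*2 + 2 <= m)%N ->
  exists c : seq 'M[F]_m, [/\ all nd c,
     map mxrank c = [seq (i.+1).*2 | i <- iota k j] & path ltr W c].
Proof.
elim: j k W => [|j IH] k W ndW rW hm; first by exists [::].
have h1 : (\rank W + 2 <= m)%N by rewrite rW; move: hm; rewrite -!muln2; clear; lia.
have [W' [ndW' WW' rW']] := ext_nd ndW h1.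
have rW'2 : \rank W' = (k.+1).*2 by rewrite rW' rW -!muln2; lia.
have h2 : ((k.+1 + j).*2 + 2 <= m)%N by move: hm; rewrite -!muln2; clear; lia.
have [c [ndc rc sc]] := IH k.+1 W' ndW' rW'2 h2.
exists (W' :: c); split.
- by rewrite /= ndW' ndc.
- by rewrite /= rc rW'2.
- rewrite /= sc andbT /ltr ltmxErank WW' rW' rW.
  by rewrite /= addn2.
Qed.

End Sp.

Theorem lemma3p4 (F : fieldType) (n : nat) (J : 'M[F]_(2 * n)) :
  (1 <= n)%N -> alternating_nondeg J ->
  (forall U : 'M[F]_(2 * n), is_vertex U -> odd (\rank U) ->
     ~~ opposite_sub U (sp_polarity J U)) /\
  (forall U : 'M[F]_(2 * n), is_vertex U -> opposite_sub U (sp_polarity J U) ->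
     exists s : seq 'M[F]_(2 * n),
       [/\ is_flag s,
           perm_eq (map mxrank s) [seq (k.+1).*2 | k <- iota 0 n.-1],
           has (fun W => (W == U)%MS) s
         & opposite_flag s (map (sp_polarity J) s)]).
Proof.
move=> n1 alt; split.
  move=> U _ oU; rewrite [sp_polarity _ _]/(perpm J U) (nd_opp alt).
  by apply/negP => ndU; have := nd_even alt erefl ndU; rewrite oU.
move=> U vU; rewrite [sp_polarity _ _]/(perpm J U) (nd_opp alt) => ndU.
have ev := nd_even alt erefl ndU.
have rU : \rank U = ((\rank U)./2).*2.
  by have := odd_double_half (\rank U); rewrite (negbTE ev) add0n.
move: vU; rewrite /is_vertex rU.
case: (\rank U)./2 rU => [|k] rU; first by [].
move=> /andP[_ hk].
have [c1 [nd1 r1 s1]] := down_chain alt ndU rU.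
have h3 : ((k.+1 + (n - 1 - k.+1)).*2 + 2 <= 2 * n)%N.
  by move: hk; rewrite -!muln2; clear; lia.
have [c2 [nd2 r2 s2]] := up_chain alt (j := (n - 1 - k.+1)%N) ndU rU h3.
set s := c1 ++ U :: c2.
have nds : all (nd J) s by rewrite all_cat /= nd1 ndU nd2.
have rs : map mxrank s = [seq (k.+1).*2 | k <- iota 0 n.-1].
  have -> : n.-1 = (k + (n - 1 - k.+1).+1)%N by move: hk; rewrite -!muln2; lia.
  by rewrite map_cat /= r1 r2 rU iotaD map_cat /= add0n.
exists s; split.
- rewrite /is_flag sorted_cat_cons s1 s2 /= andbT.
  have -> : all (@is_vertex _ _) s = all (fun r => (0 < r < 2 * n)%N) (map mxrank s).
    by rewrite all_map.
  rewrite rs; apply/allP => r /mapP [i]; rewrite mem_iota => /andP[_ hi] ->.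
  by move: hi; rewrite -!muln2; lia.
- by rewrite rs perm_refl.
- by apply/hasP; exists U; rewrite ?mem_cat ?mem_head ?orbT //= !submx_refl.
- split; first by rewrite size_map.
  have key : forall A, A \in s ->
     (\rank A + \rank (sp_polarity J A) = 2 * n)%N /\ opposite_sub A (sp_polarity J A).
    move=> A As; rewrite [sp_polarity _ _]/(perpm J A) (nd_opp alt) (allP nds A As).
    by rewrite (perp_rank alt) subnKC ?rank_leq_col.
  split.
    by move=> A As; exists (sp_polarity J A); [exact: map_f | exact: key].
  by move=> B /mapP [A As ->]; exists A => //; exact: key.
Qed.
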